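(* Let $\triangle ABC$ be an acute triangle circumscribed about an ellipse with semi-axes $a>b>0$ whose center coincides with the circumcenter of $\triangle ABC$. Then the inradius of the orthic triangle of $\triangle ABC$ equals $\dfrac{ab}{a+b}$.
   Context: A triangle is circumscribed about a conic if each of its three sidelines is tangent to the conic. The orthic triangle of $\triangle ABC$ is the triangle $H_AH_BH_C$ whose vertices are the feet of the perpendiculars from $A,B,C$ to the lines $BC,CA,AB$, respectively. *)

(* Defs.v *)
From mathcomp Require Import all_boot all_order all_algebra.
Set Implicit Arguments. Unset Strict Implicit. Unset Printing Implicit Defensive.
Import Order.TTheory GRing.Theory Num.Theory.
Local Open Scope ring_scope.

Section Plane.
Variable R : realFieldType.
Definition pt := (R * R)%type.

Definition vsub (P Q : pt) : pt := (P.1 - Q.1, P.2 - Q.2).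
Definition vadd (P Q : pt) : pt := (P.1 + Q.1, P.2 + Q.2).
Definition vscale (t : R) (P : pt) : pt := (t * P.1, t * P.2).
Definition dotp (u v : pt) : R := u.1 * v.1 + u.2 * v.2.
Definition crossp (u v : pt) : R := u.1 * v.2 - u.2 * v.1.
Definition sqdist (P Q : pt) : R := dotp (vsub P Q) (vsub P Q).

Definition on_line_at (P Q : pt) (t : R) : pt := vadd P (vscale t (vsub Q P)).

Definition acute (A B C : pt) : Prop :=
  0 < dotp (vsub B A) (vsub C A) /\ 0 < dotp (vsub A B) (vsub C B) /\
  0 < dotp (vsub A C) (vsub B C).

Definition circumcenter_of (O A B C : pt) : Prop :=
  sqdist O A = sqdist O B /\ sqdist O B = sqdist O C.

(* ellipse with center O, first axis direction (c,s) (unit vector),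
   semi-axes a (along (c,s)) and b (along (-s,c)) *)
Definition on_ellipse (O : pt) (c s a b : R) (X : pt) : Prop :=
  let d := vsub X O in
  (dotp d (c, s)) ^+ 2 / a ^+ 2 + (dotp d (- s, c)) ^+ 2 / b ^+ 2 = 1.

Definition tangent_line (O : pt) (c s a b : R) (P Q : pt) : Prop :=
  P <> Q /\
  (exists t, on_ellipse O c s a b (on_line_at P Q t)) /\
  (forall t1 t2, on_ellipse O c s a b (on_line_at P Q t1) ->
                 on_ellipse O c s a b (on_line_at P Q t2) -> t1 = t2).

Definition foot (X P Q : pt) : pt :=
  on_line_at P Q (dotp (vsub X P) (vsub Q P) / dotp (vsub Q P) (vsub Q P)).

(* squared distance from X to line PQ is r^2 *)
Definition dist_line_eq (X P Q : pt) (r : R) : Prop :=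
  (crossp (vsub Q P) (vsub X P)) ^+ 2 = r ^+ 2 * sqdist Q P.

Definition strictly_inside (X P Q S : pt) : Prop :=
  exists u v w : R, 0 < u /\ 0 < v /\ 0 < w /\ u + v + w = 1 /\
    X = vadd (vscale u P) (vadd (vscale v Q) (vscale w S)).

Definition is_inradius (r : R) (P Q S : pt) : Prop :=
  0 < r /\ exists I, strictly_inside I P Q S /\
    dist_line_eq I P Q r /\ dist_line_eq I Q S r /\ dist_line_eq I S P r.
End Plane.

(* Main.v *)
Require Import Defs.
From mathcomp Require Import all_boot all_order all_algebra ring.
Import Order.TTheory GRing.Theory Num.Theory.
Local Open Scope ring_scope.
Section S.
Context {R : rcfType}.
Definition Mform (m11 m12 m22 x y : R) := m11 * x^+2 + 2 * m12 * x * y + m22 * y^+2.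
Definition oxf (p1 p2 q1 q2 : R) :=
  (q2 * (p1^+2 + p2^+2) - p2 * (q1^+2 + q2^+2)) / (2 * (p1 * q2 - p2 * q1)).
Definition oyf (p1 p2 q1 q2 : R) :=
  (p1 * (q1^+2 + q2^+2) - q1 * (p1^+2 + p2^+2)) / (2 * (p1 * q2 - p2 * q1)).
Definition Q11f (o1 o2 p1 p2 q1 q2 : R) :=
  ((p2 + q2 - 3 * o2)^+2 - (o1^+2 + o2^+2) + o1^+2 + (p1 - o1)^+2 + (q1 - o1)^+2) / 2.
Definition Q22f (o1 o2 p1 p2 q1 q2 : R) :=
  ((p1 + q1 - 3 * o1)^+2 - (o1^+2 + o2^+2) + o2^+2 + (p2 - o2)^+2 + (q2 - o2)^+2) / 2.
Definition Q12f (o1 o2 p1 p2 q1 q2 : R) :=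
  (- (p1 + q1 - 3 * o1) * (p2 + q2 - 3 * o2) + o1 * o2 + (p1 - o1) * (p2 - o2)
    + (q1 - o1) * (q2 - o2)) / 2.
Definition rhof (o1 o2 p1 p2 q1 q2 : R) :=
  (o1^+2 + o2^+2 - ((p1 + q1 - 3 * o1)^+2 + (p2 + q2 - 3 * o2)^+2)) / 4.
End S.


Lemma nzE {T : eqType} (z x y : T) : y != z -> x = y -> x != z.
Proof. by move=> h ->. Qed.

Lemma nzE2 {R : rcfType} (x y : R) : y != 0 -> (x = 0 -> y = 0) -> x != 0.
Proof. by move=> hy hxy; apply/eqP => hx; move/eqP: hy; apply; exact: hxy. Qed.

Ltac nzt :=
  repeat (apply/andP; split);
  repeat match goal with
  | H : is_true (_ != 0) |- is_true (_ != 0) =>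
      first [ exact H | by apply/negP; move/eqP;
                 let h := fresh "h" in intro h; move/eqP: H; apply;
                 lazymatch type of h with
                 | ?x = _ => first [ (transitivity x; [ring | exact h])
                                   | (transitivity (- x); [ring | rewrite h oppr0 //]) ]
                 end ]
  end.

Section Ids.
Context {R : rcfType}.


Lemma idT1 (o1 o2 p1 p2 q1 q2 : R) :
  p1 * q2 - p2 * q1 != 0 -> o1 = oxf p1 p2 q1 q2 -> o2 = oyf p1 p2 q1 q2 ->
  crossp (vsub (p1,p2) (o1,o2)) (vsub (q1,q2) (p1,p2)) ^+ 2 =
  Mform (Q22f o1 o2 p1 p2 q1 q2) (- Q12f o1 o2 p1 p2 q1 q2) (Q11f o1 o2 p1 p2 q1 q2)
     (vsub (q1,q2) (p1,p2)).1 (vsub (q1,q2) (p1,p2)).2.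
Proof.
move=> hk -> ->; rewrite /crossp /Mform /vsub /Q11f /Q12f /Q22f /oxf /oyf /=.
by field.
Qed.

Lemma idT2 (o1 o2 p1 p2 q1 q2 : R) :
  p1 * q2 - p2 * q1 != 0 -> o1 = oxf p1 p2 q1 q2 -> o2 = oyf p1 p2 q1 q2 ->
  crossp (vsub (q1,q2) (o1,o2)) (vsub (0,0) (q1,q2)) ^+ 2 =
  Mform (Q22f o1 o2 p1 p2 q1 q2) (- Q12f o1 o2 p1 p2 q1 q2) (Q11f o1 o2 p1 p2 q1 q2)
     (vsub (0,0) (q1,q2)).1 (vsub (0,0) (q1,q2)).2.
Proof.
move=> hk -> ->; rewrite /crossp /Mform /vsub /Q11f /Q12f /Q22f /oxf /oyf /=.
by field.
Qed.

Lemma idT3 (o1 o2 p1 p2 q1 q2 : R) :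
  p1 * q2 - p2 * q1 != 0 -> o1 = oxf p1 p2 q1 q2 -> o2 = oyf p1 p2 q1 q2 ->
  crossp (vsub (0,0) (o1,o2)) (vsub (p1,p2) (0,0)) ^+ 2 =
  Mform (Q22f o1 o2 p1 p2 q1 q2) (- Q12f o1 o2 p1 p2 q1 q2) (Q11f o1 o2 p1 p2 q1 q2)
     (vsub (p1,p2) (0,0)).1 (vsub (p1,p2) (0,0)).2.
Proof.
move=> hk -> ->; rewrite /crossp /Mform /vsub /Q11f /Q12f /Q22f /oxf /oyf /=.
by field.
Qed.

Lemma idTr (o1 o2 p1 p2 q1 q2 : R) :
  p1 * q2 - p2 * q1 != 0 -> o1 = oxf p1 p2 q1 q2 -> o2 = oyf p1 p2 q1 q2 ->
  Q11f o1 o2 p1 p2 q1 q2 + Q22f o1 o2 p1 p2 q1 q2 =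
   ((p1 + q1 - 3 * o1)^+2 + (p2 + q2 - 3 * o2)^+2 + (o1^+2 + o2^+2)) / 2.
Proof.
move=> hk -> ->; rewrite /Q11f /Q22f /oxf /oyf /=.
by field.
Qed.

Lemma idDet (o1 o2 p1 p2 q1 q2 : R) :
  p1 * q2 - p2 * q1 != 0 -> o1 = oxf p1 p2 q1 q2 -> o2 = oyf p1 p2 q1 q2 ->
  Q11f o1 o2 p1 p2 q1 q2 * Q22f o1 o2 p1 p2 q1 q2 - (Q12f o1 o2 p1 p2 q1 q2)^+2
   = (rhof o1 o2 p1 p2 q1 q2)^+2.
Proof.
move=> hk -> ->; rewrite /rhof /Q11f /Q12f /Q22f /oxf /oyf /=.
by field.
Qed.

Lemma idRho (o1 o2 p1 p2 q1 q2 : R) :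
  p1 * q2 - p2 * q1 != 0 -> o1 = oxf p1 p2 q1 q2 -> o2 = oyf p1 p2 q1 q2 ->
  (p1 * q1 + p2 * q2) * (p1 * (p1 - q1) + p2 * (p2 - q2)) * (q1 * (q1 - p1) + q2 * (q2 - p2))
  = 2 * rhof o1 o2 p1 p2 q1 q2 * (p1 * q2 - p2 * q1)^+2.
Proof.
move=> hk -> ->; rewrite /rhof /oxf /oyf /=.
by field.
Qed.

Definition Ipt (o1 o2 p1 p2 q1 q2 : R) : pt R := (p1 + q1 - 2 * o1, p2 + q2 - 2 * o2).

Lemma idOrth1 (o1 o2 p1 p2 q1 q2 : R) :
  p1 * q2 - p2 * q1 != 0 -> p1^+2 + p2^+2 != 0 -> q1^+2 + q2^+2 != 0 ->
  (q1 - p1)^+2 + (q2 - p2)^+2 != 0 ->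
  o1 = oxf p1 p2 q1 q2 -> o2 = oyf p1 p2 q1 q2 ->
  (o1^+2 + o2^+2) * (crossp (vsub (foot (p1,p2) (q1,q2) (0,0)) (foot (0,0) (p1,p2) (q1,q2))) (vsub (Ipt o1 o2 p1 p2 q1 q2) (foot (0,0) (p1,p2) (q1,q2))))^+2
   = (rhof o1 o2 p1 p2 q1 q2)^+2 * sqdist (foot (p1,p2) (q1,q2) (0,0)) (foot (0,0) (p1,p2) (q1,q2)).
Proof.
move=> hk hP hQ hd -> ->.
rewrite /foot /on_line_at /crossp /sqdist /dotp /vsub /vadd /vscale /Ipt /rhof /oxf /oyf /=.
field. nzt.
Qed.

Lemma idOrth2 (o1 o2 p1 p2 q1 q2 : R) :
  p1 * q2 - p2 * q1 != 0 -> p1^+2 + p2^+2 != 0 -> q1^+2 + q2^+2 != 0 ->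
  (q1 - p1)^+2 + (q2 - p2)^+2 != 0 ->
  o1 = oxf p1 p2 q1 q2 -> o2 = oyf p1 p2 q1 q2 ->
  (o1^+2 + o2^+2) * (crossp (vsub (foot (q1,q2) (0,0) (p1,p2)) (foot (p1,p2) (q1,q2) (0,0))) (vsub (Ipt o1 o2 p1 p2 q1 q2) (foot (p1,p2) (q1,q2) (0,0))))^+2
   = (rhof o1 o2 p1 p2 q1 q2)^+2 * sqdist (foot (q1,q2) (0,0) (p1,p2)) (foot (p1,p2) (q1,q2) (0,0)).
Proof.
move=> hk hP hQ hd -> ->.
rewrite /foot /on_line_at /crossp /sqdist /dotp /vsub /vadd /vscale /Ipt /rhof /oxf /oyf /=.
field. nzt.
Qed.

Lemma idOrth3 (o1 o2 p1 p2 q1 q2 : R) :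
  p1 * q2 - p2 * q1 != 0 -> p1^+2 + p2^+2 != 0 -> q1^+2 + q2^+2 != 0 ->
  (q1 - p1)^+2 + (q2 - p2)^+2 != 0 ->
  o1 = oxf p1 p2 q1 q2 -> o2 = oyf p1 p2 q1 q2 ->
  (o1^+2 + o2^+2) * (crossp (vsub (foot (0,0) (p1,p2) (q1,q2)) (foot (q1,q2) (0,0) (p1,p2))) (vsub (Ipt o1 o2 p1 p2 q1 q2) (foot (q1,q2) (0,0) (p1,p2))))^+2
   = (rhof o1 o2 p1 p2 q1 q2)^+2 * sqdist (foot (0,0) (p1,p2) (q1,q2)) (foot (q1,q2) (0,0) (p1,p2)).
Proof.
move=> hk hP hQ hd -> ->.
rewrite /foot /on_line_at /crossp /sqdist /dotp /vsub /vadd /vscale /Ipt /rhof /oxf /oyf /=.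
field. nzt.
Qed.

Definition dAf (p1 p2 q1 q2 : R) := p1 * q1 + p2 * q2.
Definition dBf (p1 p2 q1 q2 : R) := p1 * (p1 - q1) + p2 * (p2 - q2).
Definition dCf (p1 p2 q1 q2 : R) := q1 * (q1 - p1) + q2 * (q2 - p2).
Definition wAf (p1 p2 q1 q2 : R) := ((q1 - p1)^+2 + (q2 - p2)^+2) * dAf p1 p2 q1 q2.
Definition wBf (p1 p2 q1 q2 : R) := (q1^+2 + q2^+2) * dBf p1 p2 q1 q2.
Definition wCf (p1 p2 q1 q2 : R) := (p1^+2 + p2^+2) * dCf p1 p2 q1 q2.

Lemma idInc (o1 o2 p1 p2 q1 q2 : R) :
  p1 * q2 - p2 * q1 != 0 -> p1^+2 + p2^+2 != 0 -> q1^+2 + q2^+2 != 0 ->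
  (q1 - p1)^+2 + (q2 - p2)^+2 != 0 ->
  wAf p1 p2 q1 q2 + wBf p1 p2 q1 q2 + wCf p1 p2 q1 q2 != 0 ->
  o1 = oxf p1 p2 q1 q2 -> o2 = oyf p1 p2 q1 q2 ->
  Ipt o1 o2 p1 p2 q1 q2 =
  vadd (vscale (wAf p1 p2 q1 q2 / (wAf p1 p2 q1 q2 + wBf p1 p2 q1 q2 + wCf p1 p2 q1 q2))
                (foot (0,0) (p1,p2) (q1,q2)))
   (vadd (vscale (wBf p1 p2 q1 q2 / (wAf p1 p2 q1 q2 + wBf p1 p2 q1 q2 + wCf p1 p2 q1 q2))
                (foot (p1,p2) (q1,q2) (0,0)))
         (vscale (wCf p1 p2 q1 q2 / (wAf p1 p2 q1 q2 + wBf p1 p2 q1 q2 + wCf p1 p2 q1 q2))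
                (foot (q1,q2) (0,0) (p1,p2)))).
Proof.
move=> hk hP hQ hd; rewrite /wAf /wBf /wCf /dAf /dBf /dCf => hS -> ->.
rewrite /foot /on_line_at /crossp /sqdist /dotp /vsub /vadd /vscale /Ipt /oxf /oyf /=.
congr (_, _); field; nzt.
Qed.

End Ids.
Lemma ellE (R : rcfType) (a b X Y : R) : a != 0 -> b != 0 ->
  (X / a^+2 + Y / b^+2 = 1) <-> (b^+2 * X + a^+2 * Y - a^+2 * b^+2 = 0).
Proof.
move=> ha hb; split => h.
  have -> : b^+2 * X + a^+2 * Y - a^+2 * b^+2 = a^+2 * b^+2 * (X / a^+2 + Y / b^+2 - 1) by field; nzt.
  by rewrite h subrr mulr0.
have e : X / a^+2 + Y / b^+2 - 1 = (b^+2 * X + a^+2 * Y - a^+2 * b^+2) / (a^+2 * b^+2) by field; nzt.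
by apply/eqP; rewrite -subr_eq0 e h mul0r.
Qed.

Lemma tangent_eq (R : rcfType) (O P Q : pt R) (c s a b : R) :
  c^+2 + s^+2 = 1 -> 0 < a -> 0 < b -> tangent_line O c s a b P Q ->
  crossp (vsub P O) (vsub Q P) ^+ 2 =
  Mform (b^+2 * c^+2 + a^+2 * s^+2) ((b^+2 - a^+2) * c * s) (b^+2 * s^+2 + a^+2 * c^+2)
    (vsub Q P).1 (vsub Q P).2.
Proof.
case: O => O1 O2; case: P => P1 P2; case: Q => Q1 Q2.
move=> hcs ha hb [hPQ [[t0 ht0] huniq]].
have ha0 : a != 0 by rewrite gt_eqF.
have hb0 : b != 0 by rewrite gt_eqF.
set pu := (P1 - O1) * c + (P2 - O2) * s.
set pv := (P1 - O1) * (- s) + (P2 - O2) * c.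
set qu := (Q1 - P1) * c + (Q2 - P2) * s.
set qv := (Q1 - P1) * (- s) + (Q2 - P2) * c.
set al := b^+2 * qu^+2 + a^+2 * qv^+2.
set be := 2 * (b^+2 * pu * qu + a^+2 * pv * qv).
set ga := b^+2 * pu^+2 + a^+2 * pv^+2 - a^+2 * b^+2.
have hG : forall t, on_ellipse (O1, O2) c s a b (on_line_at (P1, P2) (Q1, Q2) t) <->
                    al * t^+2 + be * t + ga = 0.
  move=> t; rewrite /on_ellipse.
  have -> : dotp (vsub (on_line_at (P1, P2) (Q1, Q2) t) (O1, O2)) (c, s) = pu + t * qu.
    by rewrite /dotp /vsub /on_line_at /vadd /vscale /pu /qu /=; ring.
  have -> : dotp (vsub (on_line_at (P1, P2) (Q1, Q2) t) (O1, O2)) (-s, c) = pv + t * qv.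
    by rewrite /dotp /vsub /on_line_at /vadd /vscale /pv /qv /=; ring.
  rewrite ellE //.
  have -> : b^+2 * (pu + t * qu)^+2 + a^+2 * (pv + t * qv)^+2 - a^+2 * b^+2 =
            al * t^+2 + be * t + ga by rewrite /al /be /ga; ring.
  by [].
have hd : (Q1 - P1)^+2 + (Q2 - P2)^+2 != 0.
  apply/negP => /eqP h; apply: hPQ.
  have : ((Q1 - P1)^+2 == 0) && ((Q2 - P2)^+2 == 0).
    by rewrite -paddr_eq0 ?sqr_ge0 // h.
  rewrite !sqrf_eq0 !subr_eq0 => /andP [/eqP e1 /eqP e2].
  by rewrite e1 e2.
have hquv : qu^+2 + qv^+2 = (Q1 - P1)^+2 + (Q2 - P2)^+2.
  transitivity (((Q1 - P1)^+2 + (Q2 - P2)^+2) * (c^+2 + s^+2)); last by rewrite hcs mulr1.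
  by rewrite /qu /qv; ring.
have hal : al != 0.
  apply/negP => /eqP h; move: hd; rewrite -hquv => /negP; apply.
  have : (b^+2 * qu^+2 == 0) && (a^+2 * qv^+2 == 0).
    have n1 : 0 <= b^+2 * qu^+2 by rewrite mulr_ge0 ?sqr_ge0.
    have n2 : 0 <= a^+2 * qv^+2 by rewrite mulr_ge0 ?sqr_ge0.
    by rewrite -(paddr_eq0 n1 n2); apply/eqP; exact: h.
  rewrite !mulf_eq0 (negbTE ha0) (negbTE hb0) /= !orbb => /andP [/eqP -> /eqP ->].
  by rewrite expr0n /= addr0.
have G0 := (hG t0).1 ht0.
pose t1 := - be / al - t0.
have G1 : al * t1^+2 + be * t1 + ga = 0.
  rewrite -G0 /t1; field; nzt.
have e01 : t0 = t1 by apply: huniq; [exact: ht0 | exact: (hG t1).2 G1].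
have h2 : 2 * al * t0 = - be.
  apply/eqP; rewrite -subr_eq0; apply/eqP.
  transitivity (al * (t0 - (- be / al - t0))); first by field; nzt.
  by rewrite -/t1 -e01 subrr mulr0.
have hdisc : be^+2 = 4 * al * ga.
  have : 4 * al * (al * t0^+2 + be * t0 + ga) = 0 by rewrite G0 mulr0.
  have -> : 4 * al * (al * t0^+2 + be * t0 + ga) = (2 * al * t0)^+2 + 2 * be * (2 * al * t0) + 4 * al * ga by ring.
  rewrite h2 => h; apply/eqP; rewrite -subr_eq0; apply/eqP; rewrite -[RHS]oppr0 -h; ring.
set X := pu * qv - pv * qu.
have hX : crossp (vsub (P1, P2) (O1, O2)) (vsub (Q1, Q2) (P1, P2)) = X.
  transitivity (crossp (vsub (P1, P2) (O1, O2)) (vsub (Q1, Q2) (P1, P2)) * (c^+2 + s^+2));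
    first by rewrite hcs mulr1.
  by rewrite /crossp /vsub /X /pu /pv /qu /qv /=; ring.
rewrite hX.
have key : 4 * (a^+2 * b^+2) * (X^+2 - (b^+2 * qu^+2 + a^+2 * qv^+2)) = 4 * al * ga - be^+2.
  by rewrite /al /ga /be /X; ring.
rewrite hdisc subrr in key.
move/eqP: key; rewrite !mulf_eq0 (negbTE ha0) (negbTE hb0) /= subr_eq0.
rewrite (_ : (4 : R) == 0 = false) /=; last by rewrite pnatr_eq0.
move=> /eqP ->.
by rewrite /Mform /qu /qv /vsub /=; ring.
Qed.

Lemma quad0 (R : rcfType) (e11 e12 e22 x1 x2 y1 y2 z1 z2 : R) :
  x1 * y2 - x2 * y1 != 0 -> z1 = - (x1 + y1) -> z2 = - (x2 + y2) ->
  Mform e11 e12 e22 x1 x2 = 0 -> Mform e11 e12 e22 y1 y2 = 0 ->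
  Mform e11 e12 e22 z1 z2 = 0 -> [/\ e11 = 0, e12 = 0 & e22 = 0].
Proof.
move=> hk -> -> fx fy fz.
have kk : (x1 * y2 - x2 * y1)^+2 != 0 by rewrite expf_neq0.
have h11 : (x1 * y2 - x2 * y1)^+2 * e11 = 0.
  transitivity (y2^+2 * Mform e11 e12 e22 x1 x2
     - x2 * y2 * (Mform e11 e12 e22 (- (x1 + y1)) (- (x2 + y2)) - Mform e11 e12 e22 x1 x2 - Mform e11 e12 e22 y1 y2)
     + x2^+2 * Mform e11 e12 e22 y1 y2); first by rewrite /Mform; ring.
  by rewrite fx fy fz; ring.
have h22 : (x1 * y2 - x2 * y1)^+2 * e22 = 0.
  transitivity (y1^+2 * Mform e11 e12 e22 x1 x2
     - x1 * y1 * (Mform e11 e12 e22 (- (x1 + y1)) (- (x2 + y2)) - Mform e11 e12 e22 x1 x2 - Mform e11 e12 e22 y1 y2)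
     + x1^+2 * Mform e11 e12 e22 y1 y2); first by rewrite /Mform; ring.
  by rewrite fx fy fz; ring.
have h12 : (x1 * y2 - x2 * y1)^+2 * e12 = 0.
  transitivity (- y1 * y2 * Mform e11 e12 e22 x1 x2
     + (y2 * x1 + x2 * y1) / 2 * (Mform e11 e12 e22 (- (x1 + y1)) (- (x2 + y2)) - Mform e11 e12 e22 x1 x2 - Mform e11 e12 e22 y1 y2)
     - x1 * x2 * Mform e11 e12 e22 y1 y2); first by rewrite /Mform; field.
  by rewrite fx fy fz; ring.
split.
- by move/eqP: h11; rewrite mulf_eq0 (negbTE kk) => /eqP.
- by move/eqP: h12; rewrite mulf_eq0 (negbTE kk) => /eqP.
- by move/eqP: h22; rewrite mulf_eq0 (negbTE kk) => /eqP.
Qed.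

Section Shift.
Context {R : rcfType}.

Definition sh (T X : pt R) : pt R := vsub X T.

Lemma vsub_sh (T X Y : pt R) : vsub (sh T X) (sh T Y) = vsub X Y.
Proof. case: T => ? ?; case: X => ? ?; case: Y => ? ?; rewrite /sh /vsub /=; congr (_, _); ring. Qed.

Lemma acute_sh (T A B C : pt R) : acute (sh T A) (sh T B) (sh T C) = acute A B C.
Proof. by rewrite /acute !vsub_sh. Qed.

Lemma circ_sh (T O A B C : pt R) :
  circumcenter_of (sh T O) (sh T A) (sh T B) (sh T C) = circumcenter_of O A B C.
Proof. by rewrite /circumcenter_of /sqdist !vsub_sh. Qed.

Lemma online_sh (T P Q : pt R) t : on_line_at (sh T P) (sh T Q) t = sh T (on_line_at P Q t).
Proof.
case: T => ? ?; case: P => ? ?; case: Q => ? ?;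
rewrite /on_line_at /sh /vsub /vadd /vscale /=; congr (_, _); ring.
Qed.

Lemma onell_sh (T O X : pt R) c s a b :
  on_ellipse (sh T O) c s a b (sh T X) = on_ellipse O c s a b X.
Proof. by rewrite /on_ellipse vsub_sh. Qed.

Lemma sh_inj (T X Y : pt R) : sh T X = sh T Y -> X = Y.
Proof.
case: T => T1 T2; case: X => X1 X2; case: Y => Y1 Y2; rewrite /sh /vsub /= => [[e1 e2]].
by rewrite -(subrK T1 X1) e1 subrK -(subrK T2 X2) e2 subrK.
Qed.

Lemma tangent_sh (T O P Q : pt R) c s a b :
  tangent_line O c s a b P Q -> tangent_line (sh T O) c s a b (sh T P) (sh T Q).
Proof.
move=> [hPQ [[t ht] hu]]; split; first by move/sh_inj.
split; first by exists t; rewrite online_sh onell_sh.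
by move=> t1 t2; rewrite !online_sh !onell_sh; exact: hu.
Qed.

Lemma foot_sh (T X P Q : pt R) : foot (sh T X) (sh T P) (sh T Q) = sh T (foot X P Q).
Proof. by rewrite /foot !vsub_sh online_sh. Qed.

Lemma dist_sh (T I P Q : pt R) r :
  dist_line_eq I (sh T P) (sh T Q) r -> dist_line_eq (vadd I T) P Q r.
Proof.
rewrite /dist_line_eq /sqdist !vsub_sh.
have -> : vsub (vadd I T) P = vsub I (sh T P).
  by case: T => ? ?; case: P => ? ?; case: I => ? ?; rewrite /sh /vsub /vadd /=; congr (_, _); ring.
by [].
Qed.

Lemma bary_sh (T P Q S I : pt R) (u v w : R) :
  u + v + w = 1 ->
  I = vadd (vscale u (sh T P)) (vadd (vscale v (sh T Q)) (vscale w (sh T S))) ->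
  vadd I T = vadd (vscale u P) (vadd (vscale v Q) (vscale w S)).
Proof.
move=> huvw ->.
have ew : w = 1 - u - v by rewrite -huvw; ring.
rewrite ew; case: T => ? ?; case: P => ? ?; case: Q => ? ?; case: S => ? ?.
by rewrite /sh /vsub /vadd /vscale /=; congr (_, _); ring.
Qed.

Lemma inr_sh (T P Q S : pt R) r :
  is_inradius r (sh T P) (sh T Q) (sh T S) -> is_inradius r P Q S.
Proof.
move=> [hr [I [[u [v [w [hu [hv [hw [huvw hI]]]]]]] [d1 [d2 d3]]]]].
split=> //; exists (vadd I T); split; last by split; [|split]; apply: dist_sh.
exists u, v, w; do 4! split => //.
by apply: bary_sh.
Qed.
End Shift.

Lemma from_eq {R : rcfType} (x y z w : R) : x = y -> z - w = x - y -> z = w.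
Proof. by move=> h e; apply/eqP; rewrite -subr_eq0 e h subrr. Qed.

Lemma Mform_sub {R : rcfType} (a1 a2 a3 b1 b2 b3 x y : R) :
  Mform (a1 - b1) (a2 - b2) (a3 - b3) x y = Mform a1 a2 a3 x y - Mform b1 b2 b3 x y.
Proof. rewrite /Mform; ring. Qed.

Lemma core (R : rcfType) (p1 p2 q1 q2 o1 o2 c s a b : R) :
  acute (0,0) (p1,p2) (q1,q2) -> circumcenter_of (o1,o2) (0,0) (p1,p2) (q1,q2) ->
  c ^+ 2 + s ^+ 2 = 1 -> 0 < b -> b < a ->
  tangent_line (o1,o2) c s a b (p1,p2) (q1,q2) ->
  tangent_line (o1,o2) c s a b (q1,q2) (0,0) ->
  tangent_line (o1,o2) c s a b (0,0) (p1,p2) ->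
  is_inradius (a * b / (a + b)) (foot (0,0) (p1,p2) (q1,q2))
    (foot (p1,p2) (q1,q2) (0,0)) (foot (q1,q2) (0,0) (p1,p2)).
Proof.
move=> [hA [hB hC]] [hc1 hc2] hcs hb hba hBC hCA hAB.
have ha : 0 < a := lt_trans hb hba.
have eA : dotp (vsub (p1,p2) (0,0)) (vsub (q1,q2) (0,0)) = dAf p1 p2 q1 q2.
  by rewrite /dotp /vsub /dAf /=; ring.
have eB : dotp (vsub (0,0) (p1,p2)) (vsub (q1,q2) (p1,p2)) = dBf p1 p2 q1 q2.
  by rewrite /dotp /vsub /dBf /=; ring.
have eC : dotp (vsub (0,0) (q1,q2)) (vsub (p1,p2) (q1,q2)) = dCf p1 p2 q1 q2.
  by rewrite /dotp /vsub /dCf /=; ring.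
rewrite eA in hA; rewrite eB in hB; rewrite eC in hC.
have hk2 : 0 < (p1 * q2 - p2 * q1)^+2.
  have -> : (p1 * q2 - p2 * q1)^+2 = dAf p1 p2 q1 q2 * dBf p1 p2 q1 q2
      + dBf p1 p2 q1 q2 * dCf p1 p2 q1 q2 + dCf p1 p2 q1 q2 * dAf p1 p2 q1 q2.
    by rewrite /dAf /dBf /dCf; ring.
  by rewrite !addr_gt0 ?mulr_gt0.
have hk : p1 * q2 - p2 * q1 != 0.
  by apply/eqP => h; move: hk2; rewrite h expr2 mul0r ltxx.
have eP : p1^+2 + p2^+2 = dAf p1 p2 q1 q2 + dBf p1 p2 q1 q2 by rewrite /dAf /dBf; ring.
have eQ : q1^+2 + q2^+2 = dAf p1 p2 q1 q2 + dCf p1 p2 q1 q2 by rewrite /dAf /dCf; ring.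
have eD : (q1 - p1)^+2 + (q2 - p2)^+2 = dBf p1 p2 q1 q2 + dCf p1 p2 q1 q2 by rewrite /dBf /dCf; ring.
have hP : p1^+2 + p2^+2 != 0 by rewrite eP gt_eqF // addr_gt0.
have hQ : q1^+2 + q2^+2 != 0 by rewrite eQ gt_eqF // addr_gt0.
have hd : (q1 - p1)^+2 + (q2 - p2)^+2 != 0 by rewrite eD gt_eqF // addr_gt0.
have e1 : 2 * (p1 * o1 + p2 * o2) = p1^+2 + p2^+2.
  move: hc1; rewrite /sqdist /dotp /vsub /= => /eqP; rewrite -subr_eq0 => /eqP h; apply/eqP; rewrite -subr_eq0; apply/eqP; rewrite -h; ring.
have e2 : 2 * (q1 * o1 + q2 * o2) = q1^+2 + q2^+2.
  move: (etrans hc1 hc2); rewrite /sqdist /dotp /vsub /= => /eqP; rewrite -subr_eq0 => /eqP h; apply/eqP; rewrite -subr_eq0; apply/eqP; rewrite -h; ring.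
have ho1 : o1 = oxf p1 p2 q1 q2.
  by rewrite /oxf -e1 -e2; field; nzt.
have ho2 : o2 = oyf p1 p2 q1 q2.
  by rewrite /oyf -e1 -e2; field; nzt.
have t1 := tangent_eq _ _ _ _ _ _ _ _ hcs ha hb hBC.
have t2 := tangent_eq _ _ _ _ _ _ _ _ hcs ha hb hCA.
have t3 := tangent_eq _ _ _ _ _ _ _ _ hcs ha hb hAB.
have u1 := idT1 _ _ _ _ _ _ hk ho1 ho2.
have u2 := idT2 _ _ _ _ _ _ hk ho1 ho2.
have u3 := idT3 _ _ _ _ _ _ hk ho1 ho2.
set m11 := b^+2 * c^+2 + a^+2 * s^+2 in t1 t2 t3.
set m12 := (b^+2 - a^+2) * c * s in t1 t2 t3.
set m22 := b^+2 * s^+2 + a^+2 * c^+2 in t1 t2 t3.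
set n11 := Q22f o1 o2 p1 p2 q1 q2 in u1 u2 u3.
set n12 := - Q12f o1 o2 p1 p2 q1 q2 in u1 u2 u3.
set n22 := Q11f o1 o2 p1 p2 q1 q2 in u1 u2 u3.
have f1 := etrans (esym t1) u1.
have f2 := etrans (esym t2) u2.
have f3 := etrans (esym t3) u3.
have g1 : Mform (m11 - n11) (m12 - n12) (m22 - n22) (vsub (q1,q2) (p1,p2)).1 (vsub (q1,q2) (p1,p2)).2 = 0.
  by rewrite Mform_sub f1 subrr.
have g2 : Mform (m11 - n11) (m12 - n12) (m22 - n22) (vsub (0,0) (q1,q2)).1 (vsub (0,0) (q1,q2)).2 = 0.
  by rewrite Mform_sub f2 subrr.
have g3 : Mform (m11 - n11) (m12 - n12) (m22 - n22) (vsub (p1,p2) (0,0)).1 (vsub (p1,p2) (0,0)).2 = 0.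
  by rewrite Mform_sub f3 subrr.
have hxy : (vsub (p1,p2) (0,0)).1 * (vsub (0,0) (q1,q2)).2 - (vsub (p1,p2) (0,0)).2 * (vsub (0,0) (q1,q2)).1 != 0.
  by rewrite /vsub /=; nzt.
have z1 : (vsub (q1,q2) (p1,p2)).1 = - ((vsub (p1,p2) (0,0)).1 + (vsub (0,0) (q1,q2)).1).
  by rewrite /vsub /=; ring.
have z2 : (vsub (q1,q2) (p1,p2)).2 = - ((vsub (p1,p2) (0,0)).2 + (vsub (0,0) (q1,q2)).2).
  by rewrite /vsub /=; ring.
have [E11 E12 E22] := quad0 _ _ _ _ _ _ _ _ _ _ hxy z1 z2 g3 g2 g1.
move/eqP: E11; rewrite subr_eq0 => /eqP E11.
move/eqP: E12; rewrite subr_eq0 => /eqP E12.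
move/eqP: E22; rewrite subr_eq0 => /eqP E22.
have htr : a^+2 + b^+2 = ((p1 + q1 - 3 * o1)^+2 + (p2 + q2 - 3 * o2)^+2 + (o1^+2 + o2^+2)) / 2.
  rewrite -(idTr _ _ _ _ _ _ hk ho1 ho2) -/n11 -/n22 -E11 -E22 /m11 /m22.
  transitivity ((a^+2 + b^+2) * (c^+2 + s^+2)); first by rewrite hcs mulr1.
  ring.
have hdet : a^+2 * b^+2 = (rhof o1 o2 p1 p2 q1 q2)^+2.
  rewrite -(idDet _ _ _ _ _ _ hk ho1 ho2) -/n11 -/n22.
  have -> : Q12f o1 o2 p1 p2 q1 q2 ^+ 2 = n12 ^+ 2 by rewrite /n12 sqrrN.
  rewrite -E11 -E12 -E22 /m11 /m12 /m22.
  transitivity (a^+2 * b^+2 * (c^+2 + s^+2)^+2); first by rewrite hcs expr1n mulr1.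
  ring.
have hrho : 0 < rhof o1 o2 p1 p2 q1 q2.
  have h := mulr_gt0 (mulr_gt0 hA hB) hC.
  rewrite /dAf /dBf /dCf (idRho _ _ _ _ _ _ hk ho1 ho2) pmulr_lgt0 // pmulr_rgt0 // in h.
have hab : a * b = rhof o1 o2 p1 p2 q1 q2.
  have h1 : 0 <= a * b by rewrite mulr_ge0 ?ltW.
  have h2 : 0 <= rhof o1 o2 p1 p2 q1 q2 by rewrite ltW.
  by apply/eqP; rewrite -(@eqrXn2 _ 2 _ _ isT h1 h2) exprMn hdet.
have hsum : (a + b)^+2 = o1^+2 + o2^+2.
  rewrite (_ : (a + b)^+2 = (a^+2 + b^+2) + 2 * (a * b)); last by ring.
  by rewrite htr hab /rhof; field.
have hab0 : a + b != 0 by rewrite gt_eqF // addr_gt0.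
have hR2 : o1^+2 + o2^+2 != 0 by rewrite -hsum expf_neq0.
have hr2 : (o1^+2 + o2^+2) * (a * b / (a + b))^+2 = (rhof o1 o2 p1 p2 q1 q2)^+2.
  by rewrite -hsum -hab; field; nzt.
split; first by rewrite divr_gt0 ?mulr_gt0 ?addr_gt0.
exists (Ipt o1 o2 p1 p2 q1 q2); split.
  have hwA : 0 < wAf p1 p2 q1 q2.
    by rewrite /wAf eD mulr_gt0 // addr_gt0.
  have hwB : 0 < wBf p1 p2 q1 q2.
    by rewrite /wBf eQ mulr_gt0 // addr_gt0.
  have hwC : 0 < wCf p1 p2 q1 q2.
    by rewrite /wCf eP mulr_gt0 // addr_gt0.
  have hS : 0 < wAf p1 p2 q1 q2 + wBf p1 p2 q1 q2 + wCf p1 p2 q1 q2 by rewrite !addr_gt0.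
  have hS0 : wAf p1 p2 q1 q2 + wBf p1 p2 q1 q2 + wCf p1 p2 q1 q2 != 0 by rewrite gt_eqF.
  exists (wAf p1 p2 q1 q2 / (wAf p1 p2 q1 q2 + wBf p1 p2 q1 q2 + wCf p1 p2 q1 q2)).
  exists (wBf p1 p2 q1 q2 / (wAf p1 p2 q1 q2 + wBf p1 p2 q1 q2 + wCf p1 p2 q1 q2)).
  exists (wCf p1 p2 q1 q2 / (wAf p1 p2 q1 q2 + wBf p1 p2 q1 q2 + wCf p1 p2 q1 q2)).
  split; first by rewrite divr_gt0.
  split; first by rewrite divr_gt0.
  split; first by rewrite divr_gt0.
  split; first by field; nzt.
  exact: idInc _ _ _ _ _ _ hk hP hQ hd hS0 ho1 ho2.
rewrite /dist_line_eq; split; [|split]; apply: (mulfI hR2); rewrite [RHS]mulrA hr2.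
- exact: idOrth1 _ _ _ _ _ _ hk hP hQ hd ho1 ho2.
- exact: idOrth2 _ _ _ _ _ _ hk hP hQ hd ho1 ho2.
- exact: idOrth3 _ _ _ _ _ _ hk hP hQ hd ho1 ho2.
Qed.

Theorem corollary5p9 (R : rcfType) (A B C O : pt R) (c s a b : R) :
  acute A B C ->
  circumcenter_of O A B C ->
  c ^+ 2 + s ^+ 2 = 1 ->
  0 < b -> b < a ->
  tangent_line O c s a b B C ->
  tangent_line O c s a b C A ->
  tangent_line O c s a b A B ->
  is_inradius (a * b / (a + b)) (foot A B C) (foot B C A) (foot C A B).
Proof.
move=> hac hcirc hcs hb hba hBC hCA hAB.
apply: (@inr_sh _ A); rewrite -!foot_sh.
rewrite -(acute_sh A) in hac.
rewrite -(circ_sh A) in hcirc.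
have hBC' := tangent_sh A _ _ _ _ _ _ _ hBC.
have hCA' := tangent_sh A _ _ _ _ _ _ _ hCA.
have hAB' := tangent_sh A _ _ _ _ _ _ _ hAB.
have hA0 : sh A A = (0, 0) by case: A {hac hcirc hBC hCA hAB hBC' hCA' hAB'} => ? ?; rewrite /sh /vsub /= !subrr.
rewrite hA0 in hac hcirc hCA' hAB' *.
move: hac hcirc hBC' hCA' hAB'.
move: (sh A B) (sh A C) (sh A O) => [p1 p2] [q1 q2] [o1 o2].
move=> hac hcirc hBC' hCA' hAB'.
exact: core hac hcirc hcs hb hba hBC' hCA' hAB'.
Qed.
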